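(* For nonnegative integers $n$ and $s$ with $s\le n$, $$\sum_{k=0}^{n}\begin{bmatrix}n+k\\2k\end{bmatrix}\begin{bmatrix}2k\\k\end{bmatrix}\begin{bmatrix}2k\\k+s\end{bmatrix}\frac{(-1)^k q^{\binom{n-k}{2}}}{(-q;q)_k^2} =\begin{cases}(-1)^s q^{\frac{n^2-s^2}{2}}\begin{bmatrix}n\\ \frac{n-s}{2}\end{bmatrix}_{q^2}^2\dfrac{(q;q)_{n-s}(q;q)_{n+s}}{(q^2;q^2)_n^2}, & \text{if } n\equiv s\pmod 2,\\[2mm] 0, & \text{otherwise.}\end{cases}$$
   Context: For an indeterminate $q$ and an integer $n\ge 0$: $(a;q)_0=1$ and $(a;q)_n=(1-a)(1-aq)\cdots(1-aq^{n-1})$. The $q$-binomial coefficient is $\begin{bmatrix}n\\k\end{bmatrix}_q=\frac{(q^{n-k+1};q)_k}{(q;q)_k}$ if $0\le k\le n$ and $0$ otherwise; if no base is indicated, the base is $q$. *)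

(* Defs.v *)
From HB Require Import structures.
From mathcomp Require Import all_boot all_order all_algebra.
From mathcomp Require Import fraction.
Set Implicit Arguments. Unset Strict Implicit. Unset Printing Implicit Defensive.
Import Order.TTheory GRing.Theory Num.Theory.
Local Open Scope ring_scope.

Definition qpoch (F : fieldType) (a q : F) (n : nat) : F :=
  \prod_(i < n) (1 - a * q ^+ i).

Definition qbinom (F : fieldType) (q : F) (n k : nat) : F :=
  if (k <= n)%N then qpoch (q ^+ (n - k).+1) q k / qpoch q q k else 0.

Definition Qq : fieldType := {fraction {poly rat}}.
Definition qX : Qq := tofrac ('X : {poly rat}).

(* Main.v *)
Require Import Defs.
From HB Require Import structures.
From mathcomp Require Import all_boot all_order all_algebra.
From mathcomp Require Import fraction.
From mathcomp Require Import ring zify.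
Import Order.TTheory GRing.Theory Num.Theory.
Set Implicit Arguments. Unset Strict Implicit. Unset Printing Implicit Defensive.
Local Open Scope ring_scope.

Definition goodq (F : fieldType) (q : F) :=
  (q != 0) /\ (forall m, (0 < m)%N -> 1 - q ^+ m != 0) /\ (forall m, 1 + q ^+ m != 0).

Lemma qpochS (F : fieldType) (a q : F) m : qpoch a q m.+1 = qpoch a q m * (1 - a * q ^+ m).
Proof. by rewrite /qpoch big_ord_recr. Qed.

Lemma qpoch_add (F : fieldType) (a q : F) i j :
  qpoch a q (i + j) = qpoch a q i * qpoch (a * q ^+ i) q j.
Proof.
rewrite /qpoch big_split_ord /=; congr (_ * _).
by apply: eq_bigr => l _; rewrite exprD mulrA.
Qed.

Lemma qpoch0 (F : fieldType) (a q : F) : qpoch a q 0 = 1.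
Proof. by rewrite /qpoch big_ord0. Qed.

Lemma fac_neq0 (F : fieldType) (q : F) m : goodq q -> qpoch q q m != 0.
Proof.
move=> [hq [h1 h2]]; apply/prodf_neq0 => i _.
by rewrite -exprS h1.
Qed.

Lemma pm_neq0 (F : fieldType) (q : F) m : goodq q -> qpoch (- q) q m != 0.
Proof.
move=> [hq [h1 h2]]; apply/prodf_neq0 => i _.
by rewrite mulNr opprK -exprS h2.
Qed.

Lemma pp_neq0 (F : fieldType) (q : F) m : goodq q -> qpoch (q ^+ 2) (q ^+ 2) m != 0.
Proof.
move=> [hq [h1 h2]]; apply/prodf_neq0 => i _.
by rewrite -exprM -exprD h1 // addn_gt0 muln_gt0.
Qed.

Lemma qbinom_fac (F : fieldType) (b : F) i j : (j <= i)%N ->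
  qpoch b b j != 0 -> qpoch b b (i - j) != 0 ->
  qbinom b i j = qpoch b b i / (qpoch b b j * qpoch b b (i - j)).
Proof.
move=> hji h1 h2; rewrite /qbinom hji.
have -> : qpoch b b i = qpoch b b (i - j) * qpoch (b ^+ (i - j).+1) b j.
  by rewrite -{1}(subnK hji) qpoch_add exprS.
by field; rewrite h1 h2.
Qed.

Definition fsum (F : fieldType) (q : F) (s n k : nat) : F :=
  qbinom q (n + k) (2 * k) * qbinom q (2 * k) k * qbinom q (2 * k) (k + s)
     * ((-1) ^+ k * q ^+ 'C(n - k, 2)) / (qpoch (- q) q k) ^+ 2.

Lemma fsum_CF (F : fieldType) (q : F) s m k : goodq q -> (s <= k)%N -> (k <= m)%N ->
  fsum q s m k = qpoch q q (m + k) * qpoch q q (2 * k) * ((-1) ^+ k * q ^+ 'C(m - k, 2))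
    / (qpoch q q (m - k) * qpoch q q k ^+ 2 * qpoch q q (k + s) * qpoch q q (k - s)
       * qpoch (- q) q k ^+ 2).
Proof.
move=> hg hsk hkm.
have e1 : (m + k - 2 * k = m - k)%N by lia.
have e2 : (2 * k - k = k)%N by lia.
have e3 : (2 * k - (k + s) = k - s)%N by lia.
rewrite /fsum !qbinom_fac ?e1 ?e2 ?e3 ?fac_neq0 //; try lia.
have := fac_neq0 (m - k) hg; have := fac_neq0 k hg; have := fac_neq0 (k + s) hg.
have := fac_neq0 (k - s) hg; have := fac_neq0 (2 * k) hg; have := pm_neq0 k hg.
move=> h1 h2 h3 h4 h5 h6.
by field; rewrite h1 h2 h3 h4 h5 h6.
Qed.

Lemma fsum_gt (F : fieldType) (q : F) s m k : (m < k)%N -> fsum q s m k = 0.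
Proof.
move=> h; rewrite /fsum /qbinom.
have -> : (2 * k <= m + k)%N = false by apply/negbTE; rewrite -ltnNge; lia.
by rewrite !mul0r.
Qed.

Lemma fsum_lt (F : fieldType) (q : F) s m k : (k < s)%N -> fsum q s m k = 0.
Proof.
move=> h; rewrite /fsum /qbinom.
have -> : (k + s <= 2 * k)%N = false by apply/negbTE; rewrite -ltnNge; lia.
by rewrite !mulr0 !mul0r.
Qed.

Definition rho (F : fieldType) (q x M S : F) :=
  - (1 - q * M * x) * (1 - q * x * x) * (1 - M / x) * (x * q / M)
  / ((1 - q * q * x * x) * (1 - q * x * S) * (1 - q * x / S)).

Lemma qn_neq0 (F : fieldType) (q : F) m : goodq q -> q ^+ m != 0.
Proof. by move=> [hq _]; rewrite expf_neq0. Qed.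

Lemma fsum_step (F : fieldType) (q : F) s m k : goodq q -> (s <= k)%N -> (k <= m)%N ->
  fsum q s m k.+1 = fsum q s m k * rho q (q ^+ k) (q ^+ m) (q ^+ s).
Proof.
move=> hg hsk; rewrite leq_eqVlt => /orP [/eqP <-|hkm].
  rewrite fsum_gt // /rho divff ?qn_neq0 // subrr.
  by rewrite !(mulr0, mul0r).
rewrite !fsum_CF //; try lia.
set d := (m - k.+1)%N.
have e1 : (m - k = d.+1)%N by rewrite /d; lia.
have e2 : (m + k.+1 = (m + k).+1)%N by lia.
have e3 : (2 * k.+1 = (2 * k).+2)%N by lia.
have e4 : (k.+1 + s = (k + s).+1)%N by lia.
have e5 : (k.+1 - s = (k - s).+1)%N by lia.
have hm : q ^+ m = q ^+ d * (q * q ^+ k).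
  by rewrite -exprS -exprD /d; congr (_ ^+ _); lia.
rewrite e1 e2 e3 e4 e5 binS bin1 !qpochS exprD.
rewrite !exprS mul2n -addnn !exprD (exprB hsk); last by rewrite unitfE; case: hg.
rewrite /rho hm.
have := fac_neq0 d hg; have := fac_neq0 k hg; have := fac_neq0 (k + s) hg.
have := fac_neq0 (k - s) hg; have := fac_neq0 (2 * k) hg; have := pm_neq0 k hg.
move=> h1 h2 h3 h4 h5 h6.
have [hq [hq1 hq2]] := hg.
have n1 : q ^+ s - q * q ^+ k != 0.
  have -> : q ^+ s - q * q ^+ k = q ^+ s * (1 - q ^+ (k - s).+1).
    rewrite (_ : q ^+ k = q ^+ s * q ^+ (k - s)); last by rewrite -exprD subnKC.
    by rewrite exprS; ring.
  by rewrite mulf_neq0 ?qn_neq0 ?hq1.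
have n2 : 1 - q * q ^+ k * q ^+ s != 0.
  by rewrite (_ : q * q ^+ k * q ^+ s = q ^+ (k + s).+1) ?hq1 // !exprS exprD; ring.
have n3 : 1 - q * q * q ^+ k * q ^+ k != 0.
  by rewrite (_ : q * q * q ^+ k * q ^+ k = q ^+ (k + k).+2) ?hq1 // !exprS exprD; ring.
have n4 : 1 - q * q ^+ d != 0 by rewrite -exprS hq1.
have n5 : 1 - q * q ^+ k != 0 by rewrite -exprS hq1.
have n6 : 1 - - q * q ^+ k != 0 by rewrite mulNr opprK -exprS hq2.
field.
by rewrite n1 n2 n3 n4 n5 n6 h1 h3 h4 h5 h6 hq !qn_neq0.
Qed.

Definition phi (F : fieldType) (q x N : F) :=
  (1 - q * N / x) * (1 - q * q * N / x) * x * x / (q * N * N)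
  / ((1 - q * N * x) * (1 - q * q * N * x)).

Lemma fsum_n2 (F : fieldType) (q : F) s n k : goodq q -> (s <= k)%N -> (k <= n.+2)%N ->
  fsum q s n k = fsum q s n.+2 k * phi q (q ^+ k) (q ^+ n).
Proof.
move=> hg hsk hkn; have [hq [hq1 hq2]] := hg.
have [hk|hk] := leqP k n; last first.
  rewrite fsum_gt // /phi.
  have : k = n.+1 \/ k = n.+2 by lia.
  case=> ->.
    rewrite (exprS q n) divff ?subrr ?mulf_neq0 ?qn_neq0 //.
    by rewrite !(mulr0, mul0r).
  rewrite (exprS q n.+1) (exprS q n) (mulrA q q) divff ?subrr ?mulf_neq0 ?qn_neq0 //.
  by rewrite !(mulr0, mul0r).
rewrite !fsum_CF //; try lia.
set d := (n - k)%N.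
have e1 : (n.+2 - k = d.+2)%N by rewrite /d; lia.
have e2 : (n.+2 + k = (n + k).+2)%N by lia.
have hn : q ^+ n = q ^+ d * q ^+ k by rewrite -exprD /d subnK.
rewrite e1 e2 !binS bin1 bin0 !qpochS /phi !exprS !expr0 !exprD hn.
have := fac_neq0 d hg; have := fac_neq0 k hg; have := fac_neq0 (k + s) hg.
have := fac_neq0 (k - s) hg; have := fac_neq0 (n + k) hg; have := pm_neq0 k hg.
move=> h1 h2 h3 h4 h5 h6.
have n1 : 1 - q * q * (q ^+ d * q ^+ k) * q ^+ k != 0.
  by rewrite (_ : q * q * (q ^+ d * q ^+ k) * q ^+ k = q ^+ (d + k + k).+2) ?hq1 // !exprS !exprD; ring.
have n2 : 1 - q * (q ^+ d * q ^+ k) * q ^+ k != 0.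
  by rewrite (_ : q * (q ^+ d * q ^+ k) * q ^+ k = q ^+ (d + k + k).+1) ?hq1 // !exprS !exprD; ring.
have n3 : 1 - q * (q * q ^+ d) != 0 by rewrite -!exprS hq1.
have n4 : 1 - q * q ^+ d != 0 by rewrite -!exprS hq1.
field.
by rewrite n1 n2 n3 n4 h1 h3 h4 h5 h6 hq !qn_neq0.
Qed.

Definition cG (F : fieldType) (q x N S z : F) :=
  - q * q * N * (1 - q * q * q * N * N) / x * (1 - x * x) * (1 - x * S) * (1 - z)
  / ((1 - q * N * x) * (1 - q * q * N * x)).

Definition Gt (F : fieldType) (q : F) s n k :=
  cG q (q ^+ k) (q ^+ n) (q ^+ s) (q ^+ (k - s)) * fsum q s n.+2 k.

Definition AA (F : fieldType) (q N S : F) := (1 - q * q * N / S) * (1 - q * q * N * S).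
Definition BB (F : fieldType) (q N S : F) := q * q * N * N * (1 - q * N / S) * (1 - q * N * S).

Lemma pow_ne (F : fieldType) (q e : F) j : goodq q -> e = q ^+ j.+1 -> 1 - e != 0.
Proof. by move=> [_ [h _]] ->; rewrite h. Qed.

Lemma point (F : fieldType) (q : F) s n k : goodq q -> (k <= n.+2)%N ->
  AA q (q ^+ n) (q ^+ s) * fsum q s n.+2 k - BB q (q ^+ n) (q ^+ s) * fsum q s n k
  = Gt q s n k.+1 - Gt q s n k.
Proof.
move=> hg hkn; have [hq [hq1 hq2]] := hg.
have [hks|hsk] := ltnP k s.
  have z1 : fsum q s n.+2 k = 0 by apply: fsum_lt.
  have z2 : fsum q s n k = 0 by apply: fsum_lt.
  rewrite /Gt z1 z2 !mulr0 subrr subr0.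
  have [hks'|] := ltnP k.+1 s; first by rewrite fsum_lt // mulr0.
  move=> hsk1; have -> : (k.+1 - s = 0)%N by lia.
  by rewrite /cG expr0 subrr !(mulr0, mul0r).
rewrite (fsum_n2 hg hsk hkn) /Gt (fsum_step hg hsk hkn).
have e1 : (k.+1 - s = (k - s).+1)%N by lia.
rewrite e1 !exprS (exprB hsk); last by rewrite unitfE.
set X := fsum q s n.+2 k.
rewrite /AA /BB /cG /phi /rho.
have m1 : 1 - q * q * q ^+ n * q ^+ k != 0.
  by apply: (pow_ne (j := (n + k).+1) hg); rewrite !exprS !exprD; ring.
have m2 : 1 - q * q ^+ n * q ^+ k != 0.
  by apply: (pow_ne (j := (n + k)) hg); rewrite !exprS !exprD; ring.
have m4 : 1 - q * q ^+ k * q ^+ s != 0.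
  by apply: (pow_ne (j := (k + s)) hg); rewrite !exprS !exprD; ring.
have m5 : 1 - q * q * q ^+ k * q ^+ k != 0.
  by apply: (pow_ne (j := (k + k).+1) hg); rewrite !exprS !exprD; ring.
have m6 : 1 - q * q * q ^+ n * (q * q ^+ k) != 0.
  by apply: (pow_ne (j := (n + k).+2) hg); rewrite !exprS !exprD; ring.
have m3 : q ^+ s - q * q ^+ k != 0.
  have -> : q ^+ s - q * q ^+ k = q ^+ s * (1 - q ^+ (k - s).+1).
    rewrite (_ : q ^+ k = q ^+ s * q ^+ (k - s)); last by rewrite -exprD subnKC.
    by rewrite exprS; ring.
  by rewrite mulf_neq0 ?qn_neq0 ?hq1.
field.
by rewrite m1 m2 m3 m4 m5 m6 hq !qn_neq0.
Qed.

Definition Ssum (F : fieldType) (q : F) s n := \sum_(0 <= k < n.+1) fsum q s n k.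

Lemma recur (F : fieldType) (q : F) s n : goodq q ->
  AA q (q ^+ n) (q ^+ s) * Ssum q s n.+2 = BB q (q ^+ n) (q ^+ s) * Ssum q s n.
Proof.
move=> hg.
have -> : Ssum q s n = \sum_(0 <= k < n.+3) fsum q s n k.
  rewrite /Ssum (big_nat_recr n.+2) // (big_nat_recr n.+1) //=.
  by rewrite (fsum_gt _ _ (ltnSn n)) (@fsum_gt _ _ _ _ n.+2) // !addr0.
apply/eqP; rewrite -subr_eq0; apply/eqP.
rewrite /Ssum !mulr_sumr -sumrB.
rewrite (telescope_sumr_eq (Gt q s n)) //; last first.
  by move=> k /andP [_ hk]; apply: point.
rewrite /Gt fsum_gt // mulr0 sub0r.
by rewrite sub0n /cG expr0 subrr !(mulr0, mul0r) oppr0.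
Qed.

Definition Rp (F : fieldType) (q : F) s a :=
  (-1) ^+ s * q ^+ (2 * a * (a + s)) * qpoch q q (2 * a) * qpoch q q (2 * a + 2 * s)
  / (qpoch (q ^+ 2) (q ^+ 2) a ^+ 2 * qpoch (q ^+ 2) (q ^+ 2) (a + s) ^+ 2).

Lemma Rrec (F : fieldType) (q : F) s a : goodq q ->
  AA q (q ^+ (s + 2 * a)) (q ^+ s) * Rp q s a.+1 = BB q (q ^+ (s + 2 * a)) (q ^+ s) * Rp q s a.
Proof.
move=> hg; have [hq [hq1 hq2]] := hg.
rewrite /Rp.
have E1 : (2 * a.+1 = (a + a).+2)%N by lia.
have E2 : (2 * a.+1 + 2 * s = (a + a + (s + s)).+2)%N by lia.
have E3 : (2 * a + 2 * s = a + a + (s + s))%N by lia.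
have E4 : (2 * a.+1 * (a.+1 + s) = 2 * a * (a + s) + (a + a + (a + a) + (s + s)).+2)%N by nia.
have E5 : (a.+1 + s = (a + s).+1)%N by lia.
rewrite E4 E2 E1 E3 E5 mul2n -addnn.
rewrite !qpochS !exprD -!exprM.
rewrite !mul2n -!addnn !exprS !expr0 !exprD /AA /BB.
have p1 : qpoch (q * (q * 1)) (q * (q * 1)) (a + s) != 0.
  by rewrite mulr1 -expr2 pp_neq0.
have p2 : qpoch (q * (q * 1)) (q * (q * 1)) a != 0.
  by rewrite mulr1 -expr2 pp_neq0.
have r1 : 1 - q * q * (q ^+ a * q ^+ a * (q ^+ s * q ^+ s)) != 0.
  by apply: (pow_ne (j := (a + a + (s + s)).+1) hg); rewrite !exprS !exprD; ring.
have r2 : 1 - q * q * (q ^+ a * q ^+ a) != 0.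
  by apply: (pow_ne (j := (a + a).+1) hg); rewrite !exprS !exprD; ring.
field.
by rewrite p1 p2 r1 r2 qn_neq0.
Qed.

Lemma pp_split (F : fieldType) (q : F) j :
  qpoch (q ^+ 2) (q ^+ 2) j = qpoch q q j * qpoch (- q) q j.
Proof.
rewrite /qpoch -big_split /=; apply: eq_bigr => i _.
rewrite exprAC; ring.
Qed.

Lemma base0 (F : fieldType) (q : F) s : goodq q -> Ssum q s s = Rp q s 0.
Proof.
move=> hg; have [hq [hq1 hq2]] := hg.
rewrite /Ssum big_nat_recr //=.
have -> : \sum_(0 <= k < s) fsum q s s k = 0.
  rewrite big_nat_cond big1 // => k /andP [/andP [_ hk] _]; exact: fsum_lt.
rewrite add0r fsum_CF // /Rp !muln0 !mul0n !add0n subnn bin0n expr0 !qpoch0.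
rewrite mul2n -addnn !pp_split.
have := fac_neq0 s hg; have := fac_neq0 (s + s) hg; have := pm_neq0 s hg.
move=> h1 h2 h3.
field.
by rewrite h1 h2 h3.
Qed.

Lemma rho_m1 (F : fieldType) (q : F) s : goodq q ->
  rho q (q ^+ s) (q ^+ s.+1) (q ^+ s) = -1.
Proof.
move=> hg; have [hq [hq1 hq2]] := hg.
have r1 : 1 - q * q * q ^+ s * q ^+ s != 0.
  by apply: (pow_ne (j := (s + s).+1) hg); rewrite !exprS !exprD; ring.
have r2 : 1 - q * q ^+ s * q ^+ s != 0.
  by apply: (pow_ne (j := (s + s)) hg); rewrite !exprS !exprD; ring.
have r3 : 1 - q != 0 by rewrite -(expr1 q) hq1.
rewrite /rho exprS.
field.
by rewrite r1 r2 r3 hq qn_neq0.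
Qed.

Lemma base1 (F : fieldType) (q : F) s : goodq q -> Ssum q s s.+1 = 0.
Proof.
move=> hg.
rewrite /Ssum big_nat_recr //= big_nat_recr //=.
have -> : \sum_(0 <= k < s) fsum q s s.+1 k = 0.
  rewrite big_nat_cond big1 // => k /andP [/andP [_ hk] _]; exact: fsum_lt.
rewrite add0r fsum_step // rho_m1 //.
by rewrite mulrN1 subrr.
Qed.

Lemma AA_neq0 (F : fieldType) (q : F) s n : goodq q -> (s <= n)%N ->
  AA q (q ^+ n) (q ^+ s) != 0.
Proof.
move=> hg hsn; have [hq [hq1 hq2]] := hg.
have hn : q ^+ n = q ^+ s * q ^+ (n - s) by rewrite -exprD subnKC.
rewrite /AA hn mulf_neq0 //.
  have -> : q * q * (q ^+ s * q ^+ (n - s)) / q ^+ s = q ^+ (n - s).+2.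
    by rewrite !exprS; field; rewrite qn_neq0.
  by rewrite hq1.
by apply: (pow_ne (j := (n - s + s + s).+1) hg); rewrite !exprS !exprD; ring.
Qed.

Lemma ind (F : fieldType) (q : F) s a : goodq q ->
  Ssum q s (s + 2 * a) = Rp q s a /\ Ssum q s (s + 2 * a).+1 = 0.
Proof.
move=> hg; elim: a => [|a [IH1 IH2]].
  by rewrite muln0 addn0 base0 // base1.
have e : (s + 2 * a.+1 = (s + 2 * a).+2)%N by lia.
rewrite e; split.
  apply: (mulfI (AA_neq0 (s := s) (n := s + 2 * a) hg (leq_addr _ _))).
  by rewrite (recur s (s + 2 * a) hg) IH1 -(Rrec s a hg).
apply: (mulfI (AA_neq0 hg (_ : s <= (s + 2 * a).+1)%N)); first lia.
by rewrite recur // IH2 !mulr0.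
Qed.

Lemma main_gen (F : fieldType) (q : F) (n s : nat) : goodq q -> (s <= n)%N ->
  Ssum q s n = if n == s %[mod 2] then
      (-1) ^+ s * q ^+ ((n ^ 2 - s ^ 2) %/ 2)
      * (qbinom (q ^+ 2) n ((n - s) %/ 2)) ^+ 2
      * qpoch q q (n - s) * qpoch q q (n + s)
      / (qpoch (q ^+ 2) (q ^+ 2) n) ^+ 2
    else 0.
Proof.
move=> hg hsn.
have [a [b [hb ->]]] : exists a b, (b < 2)%N /\ n = (s + 2 * a + b)%N.
  exists ((n - s) %/ 2)%N, ((n - s) %% 2)%N; split; first by rewrite ltn_mod.
  lia.
case: b hb => [_|[_|//]]; last first.
  have -> : (s + 2 * a + 1 == s %[mod 2]) = false.
    by apply/negbTE/negP => /eqP; lia.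
  by rewrite addn1 (ind s a hg).2.
rewrite addn0.
have -> : (s + 2 * a == s %[mod 2]) = true by apply/eqP; lia.
rewrite (ind s a hg).1.
have e1 : (((s + 2 * a) ^ 2 - s ^ 2) %/ 2 = 2 * a * (a + s))%N.
  rewrite (_ : ((s + 2 * a) ^ 2 - s ^ 2 = 2 * (2 * a * (a + s)))%N); first by rewrite mulKn.
  rewrite !expnS !expn0; nia.
have e2 : ((s + 2 * a - s) %/ 2 = a)%N by rewrite addKn mulKn.
have e3 : (s + 2 * a - s = 2 * a)%N by lia.
have e4 : (s + 2 * a + s = 2 * a + 2 * s)%N by lia.
rewrite e1 e2 e3 e4 (qbinom_fac (b := q ^+ 2) (_ : a <= s + 2 * a)%N); last 3 first.
- lia.
- exact: pp_neq0.
- exact: pp_neq0.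
have e5 : (s + 2 * a - a = a + s)%N by lia.
rewrite e5 /Rp.
have := pp_neq0 a hg; have := pp_neq0 (a + s) hg; have := pp_neq0 (s + 2 * a) hg.
move=> h1 h2 h3.
field.
by rewrite h1 h2 h3.
Qed.

Lemma qX_pow m : qX ^+ m = tofrac ('X^m : {poly rat}).
Proof. by rewrite /qX rmorphXn. Qed.

Lemma tofrac_neq0 (p : {poly rat}) : p != 0 -> tofrac p != 0.
Proof. by rewrite -tofrac0 tofrac_eq. Qed.

Lemma qX_neq0 : qX != 0.
Proof. apply: tofrac_neq0; by rewrite polyX_eq0. Qed.

Lemma one_sub_q (m : nat) : (0 < m)%N -> 1 - qX ^+ m != 0.
Proof.
move=> hm; rewrite qX_pow.
have -> : 1 - tofrac ('X^m : {poly rat}) = tofrac (1 - 'X^m) by rewrite rmorphB rmorph1.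
apply: tofrac_neq0; rewrite subr_eq0; apply/eqP => h.
have := congr1 (fun p : {poly rat} => size p) h; rewrite size_polyXn size_poly1.
by case: m hm h.
Qed.

Lemma one_add_q (m : nat) : 1 + qX ^+ m != 0.
Proof.
rewrite qX_pow.
have -> : 1 + tofrac ('X^m : {poly rat}) = tofrac (1 + 'X^m) by rewrite rmorphD rmorph1.
apply: tofrac_neq0; apply/eqP => h.
have := congr1 (fun p : {poly rat} => p.[1]) h.
rewrite hornerD hornerC hornerXn expr1n horner0 => /eqP.
by rewrite -(natrD _ 1 1) pnatr_eq0.
Qed.

Lemma good_qX : goodq qX.
Proof. split; first exact: qX_neq0. split; [exact: one_sub_q | exact: one_add_q]. Qed.

Unset Implicit Arguments.

Theorem lemma3p2 (n s : nat) (hs : (s <= n)%N) :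
  \sum_(0 <= k < n.+1)
     qbinom qX (n + k) (2 * k) * qbinom qX (2 * k) k * qbinom qX (2 * k) (k + s)
     * ((-1) ^+ k * qX ^+ 'C(n - k, 2)) / (qpoch (- qX) qX k) ^+ 2
  = if n == s %[mod 2] then
      (-1) ^+ s * qX ^+ ((n ^ 2 - s ^ 2) %/ 2)
      * (qbinom (qX ^+ 2) n ((n - s) %/ 2)) ^+ 2
      * qpoch qX qX (n - s) * qpoch qX qX (n + s)
      / (qpoch (qX ^+ 2) (qX ^+ 2) n) ^+ 2
    else 0.
Proof.
exact: (main_gen good_qX hs).
Qed.
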